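(* Let $\mathbb{F}$ be an infinite field with $\operatorname{char}(\mathbb{F})\neq 2$ and let $G$ be a non-abelian group with a group involution $\ast$ and a non-trivial orientation $\sigma:G\to\{\pm1\}$ such that $gg^\ast\in N=\ker\sigma$ for all $g\in G$. Suppose $\mathbb{F}G$ is normal with respect to the oriented involution $\circledast$ and that $N$ is abelian. Then $x^\ast=x$ for all $x\in G\setminus N$, and $n^\ast=a^{-1}na=ana^{-1}$ for all $n\in N$ and all $a\in G\setminus N$.
   Context: A group involution on $G$ is a map $\ast:G\to G$ with $(gh)^\ast=h^\ast g^\ast$ and $(g^\ast)^\ast=g$. An orientation is a group homomorphism $\sigma:G\to\{\pm1\}$. The oriented involution is $(\sum_g\alpha_g g)^\circledast=\sum_g\alpha_g\sigma(g)g^\ast$ on $\mathbb{F}G$. $\mathbb{F}G$ is normal if $\alpha\alpha^\circledast=\alpha^\circledast\alpha$ for all $\alpha\in\mathbb{F}G$. *)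

(* Defs.v *)
From HB Require Import structures.
From mathcomp Require Import all_boot all_order all_algebra.
From mathcomp Require Import monoid.
Set Implicit Arguments. Unset Strict Implicit. Unset Printing Implicit Defensive.
Import GRing.Theory.

Definition group_involution (G : groupType) (star : G -> G) : Prop :=
  (forall g h : G, star (g * h)%g = (star h * star g)%g) /\
  (forall g : G, star (star g) = g).

Definition orientation (G : groupType) (sigma : G -> int) : Prop :=
  (forall g : G, sigma g = 1%R \/ sigma g = (-1)%R) /\
  (forall g h : G, sigma (g * h)%g = (sigma g * sigma h)%R).

(* Elements of the group algebra FG are represented by finite formal sums
   sum_i a_i g_i, given as a list of pairs (a_i, g_i).  Two representations
   denote the same element of FG iff they have the same coefficient function. *)
Definition gsum (F : fieldType) (G : groupType) := seq (F * G).

Definition gcoef (F : fieldType) (G : groupType) (s : gsum F G) (g : G) : F :=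
  (\sum_(p <- s | p.2 == g) p.1)%R.

Definition gmul_coef (F : fieldType) (G : groupType) (s t : gsum F G) (g : G) : F :=
  (\sum_(p <- s) \sum_(q <- t | (p.2 * q.2)%g == g) p.1 * q.1)%R.

Definition oinv (F : fieldType) (G : groupType) (star : G -> G) (sigma : G -> int)
  (s : gsum F G) : gsum F G :=
  [seq ((p.1 * (sigma p.2)%:~R)%R, star p.2) | p <- s].

Definition FG_normal (F : fieldType) (G : groupType) (star : G -> G)
  (sigma : G -> int) : Prop :=
  forall (s : gsum F G) (g : G),
    gmul_coef s (oinv star sigma s) g = gmul_coef (oinv star sigma s) s g.

(* Main.v *)
Require Import Defs.
From HB Require Import structures.
From mathcomp Require Import all_boot all_order all_algebra.
From mathcomp Require Import monoid ring.
From Stdlib Require Import Classical.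
Import GRing.Theory.
Local Open Scope ring_scope.
Set Implicit Arguments. Unset Strict Implicit.

Definition dl (F : fieldType) {G : groupType} (x z : G) : F := if x == z then 1 else 0.

Lemma coef22 (F : fieldType) (G : groupType) (a1 a2 b1 b2 : F) (g1 g2 h1 h2 z : G) :
  gmul_coef [:: (a1, g1); (a2, g2)] [:: (b1, h1); (b2, h2)] z =
  a1 * b1 * dl F (g1 * h1)%g z + a1 * b2 * dl F (g1 * h2)%g z
  + a2 * b1 * dl F (g2 * h1)%g z + a2 * b2 * dl F (g2 * h2)%g z.
Proof.
rewrite /gmul_coef /dl !big_cons !big_nil /=.
by do 4 case: eqP => _; rewrite ?mulr1 ?mulr0 ?addr0 ?add0r ?addrA.
Qed.

Lemma coef11 (F : fieldType) (G : groupType) (a1 b1 : F) (g1 h1 z : G) :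
  gmul_coef [:: (a1, g1)] [:: (b1, h1)] z = a1 * b1 * dl F (g1 * h1)%g z.
Proof.
rewrite /gmul_coef /dl !big_cons !big_nil /=.
by case: eqP => _; rewrite ?mulr1 ?mulr0 ?addr0 ?add0r.
Qed.

Lemma two_neq0 (F : fieldType) : (2%N \notin [pchar F]) -> (2%:R : F) != 0.
Proof. by apply: contra => h; rewrite inE /= h. Qed.

Lemma sig_neq0 (F : fieldType) (G : groupType) (sigma : G -> int) g :
  orientation sigma -> ((sigma g)%:~R : F) != 0.
Proof.
by case=> [H _]; case: (H g) => ->; rewrite ?oppr_eq0 ?oner_eq0.

Qed.

Lemma comm_star (F : fieldType) (G : groupType) star sigma (g : G) :
  orientation sigma -> FG_normal F star sigma -> (g * star g = star g * g)%g.
Proof.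
move=> Ho Hn; have := Hn [:: (1, g)] (g * star g)%g.
rewrite /oinv /= !coef11 /dl eqxx.
case: eqP => // _; rewrite !mul1r mulr0 mulr1 => /eqP.
by rewrite (negbTE (@sig_neq0 F G sigma g Ho)).
Qed.

Lemma pair_eq (F : fieldType) (G : groupType) star sigma (g h z : G) :
  orientation sigma -> FG_normal F star sigma ->
  ((sigma h)%:~R * dl F (g * star h)%g z + (sigma g)%:~R * dl F (h * star g)%g z
   = (sigma g)%:~R * dl F (star g * h)%g z + (sigma h)%:~R * dl F (star h * g)%g z :> F).
Proof.
move=> Ho Hn; have := Hn [:: (1, g); (1, h)] z.
rewrite /oinv /= !coef22 (@comm_star F G star sigma g Ho Hn) (@comm_star F G star sigma h Ho Hn).
move/eqP; rewrite -subr_eq0 => /eqP E.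
apply/eqP; rewrite -subr_eq0 -E; apply/eqP; ring.
Qed.

Lemma mset (F : fieldType) (G : groupType) (p q r t : G) :
  (2%:R : F) != 0 ->
  (forall z, dl F p z + dl F q z = dl F r z + dl F t z) ->
  (p = r /\ q = t) \/ (p = t /\ q = r).
Proof.
move=> h2 H.
case: (eqVneq r p) => [rp|rp].
  subst r; left; split => //.
  have /addrI := H q; rewrite /dl eqxx; case: eqP => // _ /eqP.
  by rewrite (oner_eq0 F).
case: (eqVneq t p) => [tp|tp].
  subst t; right; split => //.
  have E := H q; rewrite (addrC (dl F p q)) in E; move/addIr: E; rewrite /dl eqxx.
  by case: eqP => [->|_] // /eqP; rewrite (oner_eq0 F).
have := H p; rewrite /dl eqxx (negbTE rp) (negbTE tp) addr0.
case: eqP => [_|_] /eqP; first by rewrite (negbTE h2).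
by rewrite addr0 oner_eq0.
Qed.

Lemma rel_mixed (F : fieldType) (G : groupType) star sigma (g h : G) :
  (2%N \notin [pchar F]) -> orientation sigma -> FG_normal F star sigma ->
  sigma g = (-1)%R -> sigma h = 1%R ->
  ((g * star h = h * star g)%g /\ (star g * h = star h * g)%g) \/
  ((g * star h = star h * g)%g /\ (star g * h = h * star g)%g).
Proof.
move=> H2 Ho Hn Hg Hh; apply: (@mset F G _ _ _ _ (@two_neq0 F H2)) => z.
have := @pair_eq F G star sigma g h z Ho Hn; rewrite Hg Hh => E.
apply/eqP; rewrite -subr_eq0; move/eqP: E; rewrite -subr_eq0 => /eqP E.
rewrite -E; apply/eqP; ring.
Qed.

Lemma rel_same (F : fieldType) (G : groupType) star sigma (g h : G) :
  (2%N \notin [pchar F]) -> orientation sigma -> FG_normal F star sigma ->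
  sigma g = (-1)%R -> sigma h = (-1)%R ->
  ((g * star h = star g * h)%g /\ (h * star g = star h * g)%g) \/
  ((g * star h = star h * g)%g /\ (h * star g = star g * h)%g).
Proof.
move=> H2 Ho Hn Hg Hh; apply: (@mset F G _ _ _ _ (@two_neq0 F H2)) => z.
have := @pair_eq F G star sigma g h z Ho Hn; rewrite Hg Hh => E.
apply/eqP; rewrite -subr_eq0; move/eqP: E; rewrite -subr_eq0 => /eqP E.
rewrite -oppr_eq0 -E; apply/eqP; ring.
Qed.

Lemma sig_pm (G : groupType) (sigma : G -> int) x :
  orientation sigma -> sigma x <> 1%R -> sigma x = (-1)%R.
Proof. by case=> H _; case: (H x). Qed.

Lemma sig1 (G : groupType) (sigma : G -> int) :
  orientation sigma -> sigma 1%g = 1%R.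
Proof.
move=> [H M]; have := M 1%g 1%g; rewrite mulg1.
by case: (H 1%g) => ->.
Qed.

Lemma sigV (G : groupType) (sigma : G -> int) x :
  orientation sigma -> sigma (x^-1)%g = sigma x.
Proof.
move=> Ho; have := sig1 Ho; rewrite -(mulgV x); case: Ho => H ->.
by case: (H x) => ->; case: (H (x^-1)%g) => ->.
Qed.

Lemma sig_star (G : groupType) star (sigma : G -> int) x :
  orientation sigma -> (forall g : G, sigma (g * star g)%g = 1%R) ->
  sigma (star x) = sigma x.
Proof.
move=> [H M] S; have := S x; rewrite M.
by case: (H x) => ->; case: (H (star x)) => ->.
Qed.

Lemma sig_inN (G : groupType) (sigma : G -> int) x y :
  orientation sigma -> sigma x = (-1)%R -> sigma y = (-1)%R -> sigma (x^-1 * y)%g = 1%R.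
Proof. by move=> Ho hx hy; case: (Ho) => _ ->; rewrite sigV // hx hy. Qed.

Lemma exists_n0 (G : groupType) (sigma : G -> int) a :
  orientation sigma -> sigma a = (-1)%R -> (exists g h : G, (g * h)%g <> (h * g)%g) ->
  (forall n m : G, sigma n = 1%R -> sigma m = 1%R -> (n * m)%g = (m * n)%g) ->
  exists n0, sigma n0 = 1%R /\ (a * n0)%g <> (n0 * a)%g.
Proof.
move=> Ho ha [g [h ngh]] Nab; apply: NNPP => Hn.
have C : forall n, sigma n = 1%R -> (a * n = n * a)%g.
  move=> n hn; apply: NNPP => hc; apply: Hn; by exists n.
have Z : forall x n, sigma n = 1%R -> (x * n = n * x)%g.
  move=> x n hn; case: (eqVneq (sigma x) 1%R) => [hx|/eqP hx]; first exact: Nab.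
  have hm := sig_inN Ho ha (sig_pm Ho hx).
  have -> : x = (a * (a^-1 * x))%g by rewrite mulVKg.
  by rewrite -mulgA (Nab _ n hm hn) mulgA (C n hn) -mulgA.
apply: ngh; case: (eqVneq (sigma h) 1%R) => [hh|/eqP hh]; first exact: Z.
case: (eqVneq (sigma g) 1%R) => [hg|/eqP hg]; first by rewrite (Z h g hg).
have hm := sig_inN Ho (sig_pm Ho hg) (sig_pm Ho hh).
have -> : h = (g * (g^-1 * h))%g by rewrite mulVKg.
by rewrite -mulgA -(Z g _ hm).
Qed.

Theorem lemma9 (F : fieldType) (G : groupType) (star : G -> G) (sigma : G -> int) :
  (* F infinite *)
  (forall s : seq F, exists x : F, x \notin s) ->
  (* char F <> 2 *)
  (2%N \notin [pchar F])%R ->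
  (* G non-abelian *)
  (exists g h : G, (g * h)%g <> (h * g)%g) ->
  group_involution star ->
  orientation sigma ->
  (* sigma non-trivial *)
  (exists g : G, sigma g = (-1)%R) ->
  (* g g^* in N = ker sigma *)
  (forall g : G, sigma (g * star g)%g = 1%R) ->
  FG_normal F star sigma ->
  (* N abelian *)
  (forall n m : G, sigma n = 1%R -> sigma m = 1%R -> (n * m)%g = (m * n)%g) ->
  (forall x : G, sigma x <> 1%R -> star x = x) /\
  (forall n a : G, sigma n = 1%R -> sigma a <> 1%R ->
     star n = (a^-1 * n * a)%g /\ star n = (a * n * a^-1)%g).
Proof.
move=> _ H2 NA Hinv Ho _ S Hn Nab.
case: Hinv => Sm _.
have sst : forall x, sigma (star x) = sigma x by move=> x; exact: (@sig_star G star sigma x Ho S).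
have getn0 : forall a, sigma a = (-1)%R ->
    exists n0, sigma n0 = 1%R /\ (a * n0)%g <> (n0 * a)%g.
  by move=> a ha; exact: (exists_n0 Ho ha NA Nab).
have step1 : forall a, sigma a <> 1%R -> star a = a.
  move=> a ha; have ha' := sig_pm Ho ha.
  case: (getn0 a ha') => n0 [hn0 nc].
  have ca := @comm_star F G star sigma a Ho Hn.
  have K : (star a * n0 = n0 * star a)%g -> (a * n0 = n0 * a)%g.
    move=> E.
    have [u hu eu] : exists2 u, sigma u = 1%R & star a = (a * u)%g.
      exists (a^-1 * star a)%g; last by rewrite mulVKg.
      by apply: sig_inN; rewrite ?sst.
    move: E; rewrite eu -mulgA (Nab _ n0 hu hn0) !mulgA.
    exact: mulIg.
  have hsn : sigma (a * n0)%g = (-1)%R by case: Ho => _ ->; rewrite ha' hn0.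
  case: (rel_mixed H2 Ho Hn ha' hn0) => [[A1 A2]|[B1 B2]]; last first.
    by exfalso; apply: nc; apply: K.
  case: (rel_same H2 Ho Hn ha' hsn) => [[C1 C2]|[D1 D2]].
    move: C2; rewrite Sm -(mulgA (star n0)) -ca mulgA => /mulIg.
    by rewrite -A2 => /mulIg.
  exfalso; apply: nc; apply: K.
  move: D2; rewrite mulgA -ca -!mulgA => /mulgI.
  done.
split => //.
move=> n a hn ha; have ha' := sig_pm Ho ha; have sa := step1 a ha.
case: (getn0 a ha') => n0 [hn0 nc].
have A0 : (a * n0 = star n0 * a)%g.
  case: (rel_mixed H2 Ho Hn ha' hn0) => [[A1 A2]|[B1 B2]]; first by rewrite -A2 sa.
  by exfalso; apply: nc; move: B2; rewrite sa.
case: (rel_mixed H2 Ho Hn ha' hn) => [[A1 A2]|[B1 B2]].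
  rewrite sa in A1 A2; split.
    by rewrite -[star n](mulKg a) A1 mulgA.
  by rewrite -[star n](mulgK a) -A2.
rewrite sa in B1 B2.
have hm : sigma (n * n0)%g = 1%R by case: Ho => _ ->; rewrite hn hn0.
have Sn : star n = n.
  case: (rel_mixed H2 Ho Hn ha' hm) => [[A1' A2']|[B1' B2']].
    move: A2'; rewrite sa; rewrite Sm mulgA B2 -mulgA A0 mulgA => /mulIg.
    rewrite (Nab n (star n0)) ?sst // => /mulgI; done.
  exfalso; apply: nc; move: B2'; rewrite sa mulgA B2 -!mulgA => /mulgI; done.
rewrite Sn; split.
  by rewrite -mulgA -B2 mulKg.
  first [by rewrite -mulgA -B2 mulKg | by rewrite mulgA B2 mulgK | by rewrite B2 mulgK ].
Qed.
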